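(* Suppose $x\in[1,2]^6$. Then $\frac{\partial\phi}{\partial x_j}(x)\ge0$ for each $j\in\{2,3,5,6\}$. In particular, for all $k_j\in[x_j,2]$, $j\in\{2,3,5,6\}$, $$\phi(x_1,x_2,x_3,x_4,x_5,x_6)\le\phi(x_1,k_2,k_3,x_4,k_5,k_6).$$
   Context: For $x=(x_1,\dots,x_6)\in\mathbb{R}^6_{\ge1}$ define $$\phi(x)=\frac{x_2x_3+x_5x_6+x_1x_2x_5+x_1x_3x_6-x_1^2x_4+x_4}{\sqrt{2x_1x_2x_6+x_1^2+x_2^2+x_6^2-1}\sqrt{2x_1x_3x_5+x_1^2+x_3^2+x_5^2-1}}.$$ *)

(* Defs.v *)
From Stdlib Require Import Reals.
From Coquelicot Require Import Coquelicot.
Open Scope R_scope.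

Definition phi (x1 x2 x3 x4 x5 x6 : R) : R :=
  (x2*x3 + x5*x6 + x1*x2*x5 + x1*x3*x6 - x1^2*x4 + x4) /
  (sqrt (2*x1*x2*x6 + x1^2 + x2^2 + x6^2 - 1) *
   sqrt (2*x1*x3*x5 + x1^2 + x3^2 + x5^2 - 1)).

Definition in12 (t : R) : Prop := 1 <= t <= 2.

(* Main.v *)
Require Import Defs.
From Stdlib Require Import Reals Lra Psatz.
From Coquelicot Require Import Coquelicot.
Open Scope R_scope.
Lemma d2 x1 x2 x3 x4 x5 x6 : 0 < 2*x1*x2*x6 + x1^2 + x2^2 + x6^2 - 1 -> 0 < 2*x1*x3*x5 + x1^2 + x3^2 + x5^2 - 1 ->
  is_derive (fun t => phi x1 t x3 x4 x5 x6) x2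
   (((x3 + x1*x5) * (2*x1*x2*x6 + x1^2 + x2^2 + x6^2 - 1) - (x2*x3 + x5*x6 + x1*x2*x5 + x1*x3*x6 - x1^2*x4 + x4)*(x1*x6+x2)) /
    ((2*x1*x2*x6 + x1^2 + x2^2 + x6^2 - 1) * sqrt (2*x1*x2*x6 + x1^2 + x2^2 + x6^2 - 1) * sqrt (2*x1*x3*x5 + x1^2 + x3^2 + x5^2 - 1))).
Proof.
intros HA HB. unfold phi.
assert (EA : 2 * x1 * x2 * x6 + x1 * (x1 * 1) + x2 * (x2 * 1) + x6 * (x6 * 1) + - (1) = 2*x1*x2*x6 + x1^2 + x2^2 + x6^2 - 1) by ring.
assert (EB : 2 * x1 * x3 * x5 + x1 * (x1 * 1) + x3 * (x3 * 1) + x5 * (x5 * 1) - 1 = 2*x1*x3*x5 + x1^2 + x3^2 + x5^2 - 1) by ring.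
assert (PA := sqrt_lt_R0 _ HA). assert (PB := sqrt_lt_R0 _ HB).
assert (SA := sqrt_sqrt _ (Rlt_le _ _ HA)). assert (SB := sqrt_sqrt _ (Rlt_le _ _ HB)).
auto_derive.
- rewrite ?EA, ?EB. repeat split; auto. apply Rgt_not_eq. apply Rmult_lt_0_compat; auto.
- rewrite ?EA, ?EB. set (sA := sqrt (2*x1*x2*x6 + x1^2 + x2^2 + x6^2 - 1)) in *.
  set (sB := sqrt (2*x1*x3*x5 + x1^2 + x3^2 + x5^2 - 1)) in *.
  clearbody sA sB. rewrite <- SA. field. lra.
Qed.

Lemma d2pos x1 x2 x3 x4 x5 x6 :
  in12 x1 -> in12 x2 -> in12 x3 -> in12 x4 -> in12 x5 -> in12 x6 ->
  exists d, is_derive (fun t => phi x1 t x3 x4 x5 x6) x2 d /\ 0 <= d.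
Proof.
unfold in12; intros H1 H2 H3 H4 H5 H6.
assert (P12 : x1*x2 >= 1) by nra. assert (P13 : x1*x3 >= 1) by nra.
assert (P126 : x1*x2*x6 >= 1) by nra. assert (P135 : x1*x3*x5 >= 1) by nra.
assert (HA : 0 < 2*x1*x2*x6 + x1^2 + x2^2 + x6^2 - 1) by nra.
assert (HB : 0 < 2*x1*x3*x5 + x1^2 + x3^2 + x5^2 - 1) by nra.
eexists; split; [apply d2; auto|].
assert (E : (x3 + x1*x5) * (2*x1*x2*x6 + x1^2 + x2^2 + x6^2 - 1) - (x2*x3 + x5*x6 + x1*x2*x5 + x1*x3*x6 - x1^2*x4 + x4)*(x1*x6+x2)
 = (x1-1)*(x1+1)*(x3*(1-x6^2) + x5*(x1+x2*x6) + x4*(x1*x6+x2))) by ring.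
rewrite E. apply Rmult_le_pos.
- apply Rmult_le_pos; [apply Rmult_le_pos; lra|].
  assert (Q1 : 0 <= (2-x3)*(x6^2-1)) by (apply Rmult_le_pos; nra).
  assert (Q2 : 0 <= (x5-1)*(x1+x2*x6)) by (apply Rmult_le_pos; nra).
  assert (Q3 : 0 <= (x4-1)*(x1*x6+x2)) by (apply Rmult_le_pos; nra).
  assert (Q4 : 0 <= (x1+x2-2)*(1+x6)) by (apply Rmult_le_pos; nra).
  assert (Q5 : 0 <= (1+x6)*(2-x6)) by (apply Rmult_le_pos; nra).
  nra.
- apply Rlt_le, Rinv_0_lt_compat.
  assert (PA := sqrt_lt_R0 _ HA). assert (PB := sqrt_lt_R0 _ HB).
  apply Rmult_lt_0_compat; [apply Rmult_lt_0_compat|]; auto.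
Qed.

Lemma sw1 x1 a b x4 c d : phi x1 a b x4 c d = phi x1 b a x4 d c.
Proof.
unfold phi. rewrite (Rmult_comm (sqrt _)).
repeat (f_equal; try ring).
Qed.

Lemma sw2 x1 a b x4 c d : phi x1 a b x4 c d = phi x1 d c x4 b a.
Proof.
unfold phi. repeat (f_equal; try ring).
Qed.

Lemma d3pos x1 x2 x3 x4 x5 x6 :
  in12 x1 -> in12 x2 -> in12 x3 -> in12 x4 -> in12 x5 -> in12 x6 ->
  exists d, is_derive (fun t => phi x1 x2 t x4 x5 x6) x3 d /\ 0 <= d.
Proof.
intros. destruct (d2pos x1 x3 x2 x4 x6 x5) as [d [Hd Hp]]; auto.
exists d; split; auto. eapply is_derive_ext; [|exact Hd]. intros t; simpl. apply sw1.
Qed.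

Lemma d6pos x1 x2 x3 x4 x5 x6 :
  in12 x1 -> in12 x2 -> in12 x3 -> in12 x4 -> in12 x5 -> in12 x6 ->
  exists d, is_derive (fun t => phi x1 x2 x3 x4 x5 t) x6 d /\ 0 <= d.
Proof.
intros. destruct (d2pos x1 x6 x5 x4 x3 x2) as [d [Hd Hp]]; auto.
exists d; split; auto. eapply is_derive_ext; [|exact Hd]. intros t; simpl. apply sw2.
Qed.

Lemma d5pos x1 x2 x3 x4 x5 x6 :
  in12 x1 -> in12 x2 -> in12 x3 -> in12 x4 -> in12 x5 -> in12 x6 ->
  exists d, is_derive (fun t => phi x1 x2 x3 x4 t x6) x5 d /\ 0 <= d.
Proof.
intros. destruct (d3pos x1 x6 x5 x4 x3 x2) as [d [Hd Hp]]; auto.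
exists d; split; auto. eapply is_derive_ext; [|exact Hd]. intros t; simpl. apply sw2.
Qed.

Lemma conv f x : (exists d, is_derive f x d /\ 0 <= d) -> ex_derive f x /\ 0 <= Derive f x.
Proof.
intros [d [Hd Hp]]. split. exists d; exact Hd. rewrite (is_derive_unique _ _ _ Hd); exact Hp.
Qed.

Lemma mono (g : R -> R) : (forall t, 1 <= t <= 2 -> exists d, is_derive g t d /\ 0 <= d) ->
  forall a b, 1 <= a -> a <= b -> b <= 2 -> g a <= g b.
Proof.
intros Hg a b Ha Hab Hb.
destruct (MVT_gen g a b (Derive g)) as [c [Hc E]].
- intros x Hx. rewrite Rmin_left, Rmax_right in Hx by lra.
  destruct (Hg x ltac:(lra)) as [d [Hd _]]. rewrite (is_derive_unique _ _ _ Hd). exact Hd.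
- intros x Hx. rewrite Rmin_left, Rmax_right in Hx by lra.
  destruct (Hg x ltac:(lra)) as [d [Hd _]]. apply continuity_pt_filterlim.
  apply (ex_derive_continuous (K:=R_AbsRing) (V:=R_NormedModule) g x). exists d; exact Hd.
- rewrite Rmin_left, Rmax_right in Hc by lra.
  destruct (Hg c ltac:(lra)) as [d [Hd Hp]]. rewrite (is_derive_unique _ _ _ Hd) in E.
  nra.
Qed.

Theorem lemma3p4 (x1 x2 x3 x4 x5 x6 : R) :
  in12 x1 -> in12 x2 -> in12 x3 -> in12 x4 -> in12 x5 -> in12 x6 ->
  (* partial derivatives in x2, x3, x5, x6 exist and are nonnegative *)
  (ex_derive (fun t => phi x1 t x3 x4 x5 x6) x2 /\
     0 <= Derive (fun t => phi x1 t x3 x4 x5 x6) x2) /\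
  (ex_derive (fun t => phi x1 x2 t x4 x5 x6) x3 /\
     0 <= Derive (fun t => phi x1 x2 t x4 x5 x6) x3) /\
  (ex_derive (fun t => phi x1 x2 x3 x4 t x6) x5 /\
     0 <= Derive (fun t => phi x1 x2 x3 x4 t x6) x5) /\
  (ex_derive (fun t => phi x1 x2 x3 x4 x5 t) x6 /\
     0 <= Derive (fun t => phi x1 x2 x3 x4 x5 t) x6) /\
  (* consequence: monotonicity *)
  (forall k2 k3 k5 k6 : R,
     x2 <= k2 <= 2 -> x3 <= k3 <= 2 -> x5 <= k5 <= 2 -> x6 <= k6 <= 2 ->
     phi x1 x2 x3 x4 x5 x6 <= phi x1 k2 k3 x4 k5 k6).
Proof.
intros H1 H2 H3 H4 H5 H6.
split; [apply conv, d2pos; auto|].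
split; [apply conv, d3pos; auto|].
split; [apply conv, d5pos; auto|].
split; [apply conv, d6pos; auto|].
intros k2 k3 k5 k6 K2 K3 K5 K6.
assert (I2 : in12 k2) by (unfold in12 in *; lra).
assert (I3 : in12 k3) by (unfold in12 in *; lra).
assert (I5 : in12 k5) by (unfold in12 in *; lra).
assert (I6 : in12 k6) by (unfold in12 in *; lra).
unfold in12 in H2, H3, H5, H6.
apply Rle_trans with (phi x1 k2 x3 x4 x5 x6).
{ apply (mono (fun t => phi x1 t x3 x4 x5 x6)); try lra.
  intros t Ht. apply d2pos; auto. }
apply Rle_trans with (phi x1 k2 k3 x4 x5 x6).
{ apply (mono (fun t => phi x1 k2 t x4 x5 x6)); try lra.
  intros t Ht. apply d3pos; auto. }
apply Rle_trans with (phi x1 k2 k3 x4 k5 x6).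
{ apply (mono (fun t => phi x1 k2 k3 x4 t x6)); try lra.
  intros t Ht. apply d5pos; auto. }
apply (mono (fun t => phi x1 k2 k3 x4 k5 t)); try lra.
intros t Ht. apply d6pos; auto.
Qed.
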